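(* Let $X$ be a finite set and $H$ a real-valued function on the nonempty subsets of $X$. Suppose there is an equivalence relation $\sim$ on $X$ such that, for all disjoint nonempty $A,B\subseteq X$, the sets $A$ and $B$ are combinatorially dependent if and only if there exist $a\in A$ and $b\in B$ with $a\sim b$. Let $\mathcal P=\{C_1,\dots,C_k\}$ be the partition of $X$ into the equivalence classes of $\sim$. Then $\mathcal H(\mathcal P)\le \mathcal H(\mathcal P')$ for every partition $\mathcal P'$ of $X$; that is, $\mathcal P$ minimizes $\mathcal H$ over all partitions of $X$.
   Context: For disjoint nonempty $A,B\subseteq X$, $A$ and $B$ are called combinatorially dependent if $H(A\cup B)<H(A)+H(B)$, and combinatorially independent otherwise. For a partition $\mathcal P$ of $X$ into nonempty classes, $\mathcal H(\mathcal P)=\sum_{Y\in\mathcal P}H(Y)$. *)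

(* Defs.v *)
From mathcomp Require Import all_boot all_order all_algebra.
From mathcomp Require Import reals.
Set Implicit Arguments. Unset Strict Implicit. Unset Printing Implicit Defensive.
Import Order.TTheory GRing.Theory Num.Theory.
Local Open Scope ring_scope.

(* H is a function on subsets of X = [set: T]; only its values on nonempty
   subsets are ever used. *)

Definition comb_dependent (R : realType) (T : finType) (H : {set T} -> R)
  (A B : {set T}) : Prop := H (A :|: B) < H A + H B.

Definition HP (R : realType) (T : finType) (H : {set T} -> R)
  (P : {set {set T}}) : R := \sum_(Y in P) H Y.

(* Main.v *)
Require Import Defs.
From mathcomp Require Import all_boot all_order all_algebra.
From mathcomp Require Import reals.
Import Order.TTheory GRing.Theory Num.Theory.
Local Open Scope ring_scope.

Section Aux.
Variables (R : realType) (T : finType) (H : {set T} -> R) (e : rel T).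
Hypothesis hdep : forall A B : {set T}, A != set0 -> B != set0 -> [disjoint A & B] ->
     (comb_dependent H A B <-> exists a b, [/\ a \in A, b \in B & e a b]).

Lemma disjP (A B : {set T}) : (forall x, x \in A -> x \in B -> False) -> [disjoint A & B].
Proof.
move=> h; rewrite -setI_eq0; apply/eqP/setP => x; rewrite in_setI in_set0.
by apply/negP => /andP [xa xb]; exact: h xa xb.
Qed.

Lemma split_lem (I : finType) (A : {set I}) (f : I -> {set T}) :
  (forall x, e x x) ->
  A != set0 -> (forall i, i \in A -> f i != set0) ->
  (forall i j, i \in A -> j \in A -> i != j -> forall a b, a \in f i -> b \in f j -> ~~ e a b) ->
  \sum_(i in A) H (f i) <= H (\bigcup_(i in A) f i).
Proof.
move=> refl; have [n] := ubnP #|A|; elim: n A => // n IH A hn hA hne hx.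
case/set0Pn: (hA) => i Ai.
rewrite (big_setD1 (F := fun j => H (f j)) i Ai) (big_setD1 (F := f) i Ai) /=.
have [A0|A0] := eqVneq (A :\ i) set0.
  by rewrite A0 !big_set0 setU0 addr0.
have sub : forall j, j \in A :\ i -> j \in A by move=> j; rewrite in_setD1 => /andP[].
set U := \bigcup_(j in A :\ i) f j.
have IH' : \sum_(j in A :\ i) H (f j) <= H U.
  apply: IH => //.
  - by move: hn; rewrite (cardsD1 i A) Ai.
  - by move=> j /sub; apply: hne.
  - by move=> j k /sub jA /sub kA; apply: hx.
have ne : forall j a, j \in A :\ i -> a \in f j -> i != j.
  by move=> j a; rewrite in_setD1 eq_sym => /andP[].
have hU : U != set0.
  case/set0Pn: A0 => j jA; case/set0Pn: (hne j (sub j jA)) => a aj.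
  by apply/set0Pn; exists a; apply/bigcupP; exists j.
have hdj : [disjoint f i & U].
  apply: disjP => x xi /bigcupP [j jA xj].
  by move: (hx i j Ai (sub j jA) (ne j x jA xj) x x xi xj); rewrite refl.
apply: (le_trans (lerD (lexx _) IH')).
rewrite leNgt; apply/negP => hlt.
have : comb_dependent H (f i) U by [].
move/(hdep _ _ (hne i Ai) hU hdj) => [a [b [ai /bigcupP [j jA bj] eab]]].
by move: (hx i j Ai (sub j jA) (ne j b jA bj) a b ai bj); rewrite eab.
Qed.

Lemma merge_lem (I : finType) (A : {set I}) (f : I -> {set T}) :
  A != set0 -> (forall i, i \in A -> f i != set0) ->
  (forall i j, i \in A -> j \in A -> i != j -> [disjoint f i & f j]) ->
  (forall i j, i \in A -> j \in A -> forall a b, a \in f i -> b \in f j -> e a b) ->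
  H (\bigcup_(i in A) f i) <= \sum_(i in A) H (f i).
Proof.
have [n] := ubnP #|A|; elim: n A => // n IH A hn hA hne hd hx.
case/set0Pn: (hA) => i Ai.
rewrite (big_setD1 (F := fun j => H (f j)) i Ai) (big_setD1 (F := f) i Ai) /=.
have [A0|A0] := eqVneq (A :\ i) set0.
  by rewrite A0 !big_set0 setU0 addr0.
have sub : forall j, j \in A :\ i -> j \in A by move=> j; rewrite in_setD1 => /andP[].
set U := \bigcup_(j in A :\ i) f j.
have IH' : H U <= \sum_(j in A :\ i) H (f j).
  apply: IH => //.
  - by move: hn; rewrite (cardsD1 i A) Ai.
  - by move=> j /sub; apply: hne.
  - by move=> j k /sub jA /sub kA; apply: hd.
  - by move=> j k /sub jA /sub kA; apply: hx.
have hU : U != set0.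
  case/set0Pn: A0 => j jA; case/set0Pn: (hne j (sub j jA)) => a aj.
  by apply/set0Pn; exists a; apply/bigcupP; exists j.
have hdj : [disjoint f i & U].
  apply: disjP => x xi /bigcupP [j jA xj].
  have ij : i != j by move: jA; rewrite in_setD1 eq_sym => /andP[].
  have := hd i j Ai (sub j jA) ij; rewrite -setI_eq0 => /eqP/setP/(_ x).
  by rewrite in_setI in_set0 xi xj.
have dep : comb_dependent H (f i) U.
  apply/(hdep _ _ (hne i Ai) hU hdj).
  case/set0Pn: (hne i Ai) => a ai; case/set0Pn: hU => b /bigcupP [j jA bj].
  exists a, b; split => //.
    by apply/bigcupP; exists j.
  exact: (hx i j Ai (sub j jA)).
apply: (le_trans (ltW dep)); exact: lerD.
Qed.

End Aux.

Theorem lemma1 (R : realType) (T : finType) (H : {set T} -> R) (e : rel T)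
  (he : equivalence_rel e)
  (hdep : forall A B : {set T}, A != set0 -> B != set0 -> [disjoint A & B] ->
     (comb_dependent H A B <-> exists a b, [/\ a \in A, b \in B & e a b]))
  (P' : {set {set T}}) (hP' : partition P' [set: T]) :
  HP H (equivalence_partition e [set: T]) <= HP H P'.
Proof.
have refl : forall x, e x x by move=> x; case: (he x x x) => ->.
have trans : forall x y z, e x y -> e y z -> e x z.
  by move=> x y z exy eyz; case: (he x y z) => _ /(_ exy) ->.
have sym : forall x y, e x y -> e y x.
  by move=> x y exy; case: (he x y x) => _ /(_ exy) <-; apply: refl.
set Q := equivalence_partition e [set: T].
have Qdef : forall C, C \in Q -> exists x, C = [set y in [set: T] | e x y].
  by move=> C /imsetP [x _ ->]; exists x.
have QE : forall C a b, C \in Q -> a \in C -> b \in C -> e a b.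
  move=> C a b /Qdef [x ->]; rewrite !inE => ha hb; apply: (trans _ x) => //.
  exact: sym.
have Qeq : forall C1 C2 a b, C1 \in Q -> C2 \in Q -> a \in C1 -> b \in C2 -> e a b -> C1 = C2.
  move=> C1 C2 a b /Qdef [x ->] /Qdef [y ->]; rewrite !inE => ha hb eab.
  apply/setP => z; rewrite !inE; apply/idP/idP => h.
    apply: (trans _ b) => //; apply: (trans _ a); first exact: sym.
    by apply: (trans _ x) => //; exact: sym.
  apply: (trans _ a) => //; apply: (trans _ b) => //.
  by apply: (trans _ y) => //; exact: sym.
have blk : forall x, [set y in [set: T] | e x y] \in Q.
  by move=> x; apply/imsetP; exists x.
have inblk : forall x, x \in [set y in [set: T] | e x y] by move=> x; rewrite !inE refl.
case/and3P: hP' => /eqP cov triv n0.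
have inP' : forall x, exists2 Y, Y \in P' & x \in Y.
  move=> x; have : x \in cover P' by rewrite cov inE.
  by case/bigcupP => Y YP xY; exists Y.
have step1 : \sum_(Y in P') \sum_(C in [set C in Q | Y :&: C != set0]) H (Y :&: C) <= HP H P'.
  rewrite /HP; apply: ler_sum => Y YP.
  have YU : \bigcup_(C in [set C in Q | Y :&: C != set0]) (Y :&: C) = Y.
    apply/setP => y; apply/idP/idP.
      by case/bigcupP => C _; rewrite in_setI => /andP[].
    move=> yY; apply/bigcupP; exists [set z in [set: T] | e y z].
      by rewrite inE blk; apply/set0Pn; exists y; rewrite in_setI yY inblk.
    by rewrite in_setI yY inblk.
  rewrite -[X in _ <= H X]YU.
  refine (@split_lem R T H e hdep _ [set C0 in Q | Y :&: C0 != set0] (fun C => Y :&: C) refl _ _ _).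
  - have : Y != set0 by apply: contraNneq n0 => <-.
    case/set0Pn => y yY; apply/set0Pn; exists [set z in [set: T] | e y z].
    by rewrite inE blk; apply/set0Pn; exists y; rewrite in_setI yY inblk.
  - by move=> C; rewrite inE => /andP[].
  - move=> C1 C2; rewrite !inE => /andP [C1Q _] /andP [C2Q _] ne a b.
    rewrite !in_setI => /andP [_ aC] /andP [_ bC]; apply/negP => eab.
    by move/eqP: ne; apply; apply: Qeq eab.
have step2 : \sum_(Y in P') \sum_(C in [set C in Q | Y :&: C != set0]) H (Y :&: C)
   = \sum_(C in Q) \sum_(Y in [set Y in P' | Y :&: C != set0]) H (Y :&: C).
  have E1 : forall Y, \sum_(C in [set C in Q | Y :&: C != set0]) H (Y :&: C)
      = \sum_(C in Q) (if Y :&: C != set0 then H (Y :&: C) else 0).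
    move=> Y; rewrite big_mkcond [RHS]big_mkcond; apply: eq_bigr => C _.
    by rewrite inE; case: (C \in Q); case: (Y :&: C != set0).
  have E2 : forall C, \sum_(Y in [set Y in P' | Y :&: C != set0]) H (Y :&: C)
      = \sum_(Y in P') (if Y :&: C != set0 then H (Y :&: C) else 0).
    move=> C; rewrite big_mkcond [RHS]big_mkcond; apply: eq_bigr => Y _.
    by rewrite inE; case: (Y \in P'); case: (Y :&: C != set0).
  rewrite (eq_bigr _ (fun Y _ => E1 Y)) (eq_bigr _ (fun C _ => E2 C)).
  exact: exchange_big.
apply: le_trans step1; rewrite step2 /HP; apply: ler_sum => C CQ.
have CU : \bigcup_(Y in [set Y in P' | Y :&: C != set0]) (Y :&: C) = C.
  apply/setP => c; apply/idP/idP.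
    by case/bigcupP => Y _; rewrite in_setI => /andP[].
  move=> cC; case: (inP' c) => Y YP cY; apply/bigcupP; exists Y.
    by rewrite inE YP; apply/set0Pn; exists c; rewrite in_setI cY.
  by rewrite in_setI cY.
rewrite -[X in H X <= _]CU.
refine (@merge_lem R T H e hdep _ [set Y in P' | Y :&: C != set0] (fun Y => Y :&: C) _ _ _ _).
- have [x ->] := Qdef C CQ; case: (inP' x) => Y YP xY.
  apply/set0Pn; exists Y; rewrite inE YP; apply/set0Pn; exists x.
  by rewrite in_setI xY inblk.
- by move=> Y; rewrite inE => /andP[].
- move=> Y1 Y2; rewrite !inE => /andP [Y1P _] /andP [Y2P _] ne.
  have := (trivIsetP triv) Y1 Y2 Y1P Y2P ne; rewrite -!setI_eq0 => /eqP h.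
  by rewrite setIACA h set0I.
- move=> Y1 Y2 _ _ a b; rewrite !in_setI => /andP [_ aC] /andP [_ bC].
  exact: QE aC bC.
Qed.
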